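(* Under the locking mechanism described in the context (with partial matches in the expansion lists stored independently), the global schedule of concurrently executing the edge insertion and deletion transactions is streaming consistent.
   Context: A streaming graph is a growing sequence of labelled directed edges with strictly increasing timestamps; under a sliding window, at each time point an edge may arrive and an edge may expire. A (continuous) query $Q$ with a timing order on its edges is evaluated by maintaining expansion lists: $Q$ is decomposed into edge-disjoint timing-connected subqueries $Q^1,\dots,Q^k$; for each $Q^i$ with timing sequence $\epsilon_1,\dots,\epsilon_{m}$ there is a list $L_i=\{L_i^1,\dots,L_i^{m}\}$ whose item $L_i^j$ stores the matches of the subquery $\{\epsilon_1,\dots,\epsilon_j\}$, and a list $L_0=\{L_0^1,\dots,L_0^k\}$ whose item $L_0^i$ stores matches of $Q^1\cup\dots\cup Q^i$; the items are the shared resources. Inserting an incoming edge $\sigma$ ($Ins(\sigma)$) and deleting an expired edge $\sigma'$ ($Del(\sigma')$) are each modeled as a transaction, with timestamp equal to the time the operation happens, and each is executed by its own thread as a sequence of elementary operations READ/INSERT/DELETE on individual items. Locks (shared S or exclusive X) are associated with individual items, and each item has a thread-safe FIFO wait-list of lock requests $\langle$thread id, lock type, item$\rangle$. A single main thread processes the transactions serially in timestamp order: before launching a thread $T$ it appends all of $T$'s lock requests to the ends of the wait-lists of the corresponding items, then launches $T$; launched threads run concurrently. A thread $T$ may access an item only after locking it, and it obtains the lock iff its request is at the head of that item's wait-list and the lock is compatible with the item's current status (the item is free, or both the held lock and requested lock are shared); upon obtaining the lock the request is removed from the wait-list. When $T$ finishes its computation on the item it releases the lock and wakes the thread whose request is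 now at the head of the wait-list. Each thread holds at most one lock at a time. Streaming consistency: at each time point, the answers of $Q$ are the same as those obtained by executing the insertions/deletions of edges serially in the chronological order of their timestamps. *)

(* Defs.v *)
From mathcomp Require Import all_boot.
Set Implicit Arguments. Unset Strict Implicit. Unset Printing Implicit Defensive.

Inductive opkind := READ | INSERT | DELETE.
Inductive locktype := SLock | XLock.

Definition lock_of (k : opkind) : locktype :=
  match k with READ => SLock | _ => XLock end.

Section Model.
(* I : the items (shared resources L_i^j, L_0^i); V : contents of an item
   (a set of partial matches); Loc : local (thread-private) state of a
   transaction's thread. *)
Variables (I : eqType) (V Loc : Type).

Record op := Op { op_item : I; op_kind : opkind; op_eff : Loc -> V -> Loc * V }.

(* Transactions are given
   as a list in timestamp order; the thread id of a transaction is its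
   position in this list. *)
Record txn := Txn { t_init : Loc; t_ops : seq op }.

Definition store := I -> V.

Definition upd (s : store) (x : I) (v : V) : store :=
  fun y => if y == x then v else s y.

Definition apply_op (o : op) (st : store * Loc) : store * Loc :=
  let: (s, l) := st in
  let: (l', v') := op_eff o l (s (op_item o)) in
  (if op_kind o is READ then s else upd s (op_item o) v', l').

Definition run_txn (s : store) (t : txn) : store * Loc :=
  foldl (fun st o => apply_op o st) (s, t_init t) (t_ops t).

Fixpoint serial (s : store) (ts : seq txn) : store * seq Loc :=
  match ts with
  | [::] => (s, [::])
  | t :: ts' => let: (s1, l1) := run_txn s t in
                let: (s2, ls) := serial s1 ts' in (s2, l1 :: ls)
  end.

Record config := Config {
  c_store : store;
  c_loc : nat -> option Loc;
  c_pc : nat -> nat;                     (* number of locks obtained so far by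
                                            each thread (= index of its next
                                            operation) *)
  c_hold : nat -> option (I * locktype); (* the (at most one) lock held *)
  c_launched : nat;
  c_wl : I -> seq (nat * nat)            (* FIFO wait-list of each item:
                                            lock requests (thread id, op index);
                                            the lock type and item of a
                                            request are those of that op *)
}.

Variable ts : seq txn.

Definition ops_of (i : nat) : seq op := nth [::] (map t_ops ts) i.

Definition requests (i : nat) (x : I) : seq (nat * nat) :=
  [seq (i, k) | k <- iota 0 (size (ops_of i)) &
                op_item (nth (Op x READ (fun l v => (l, v))) (ops_of i) k) == x].

Definition init_config (s0 : store) : config :=
  Config s0 (fun i => nth None (map (fun t => Some (t_init t)) ts) i)
         (fun _ => 0) (fun _ => None) 0 (fun _ => [::]).

Definition compatible (c : config) (x : I) (lt : locktype) : Prop :=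
  forall j lt', c_hold c j = Some (x, lt') -> lt = SLock /\ lt' = SLock.

Definition fupd {T} (f : nat -> T) (i : nat) (v : T) : nat -> T :=
  fun j => if j == i then v else f j.

Inductive step : config -> config -> Prop :=
  | StepLaunch c :
      c_launched c < size ts ->
      step c (Config (c_store c) (c_loc c) (c_pc c) (c_hold c)
                     (c_launched c).+1
                     (fun x => c_wl c x ++ requests (c_launched c) x))
  | StepAcquire c i o l s' l' :
      i < c_launched c ->
      c_hold c i = None ->
      onth (ops_of i) (c_pc c i) = Some o ->
      ohead (c_wl c (op_item o)) = Some (i, c_pc c i) ->
      compatible c (op_item o) (lock_of (op_kind o)) ->
      c_loc c i = Some l ->
      apply_op o (c_store c, l) = (s', l') ->
      step c (Config s' (fupd (c_loc c) i (Some l'))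
                     (fupd (c_pc c) i (c_pc c i).+1)
                     (fupd (c_hold c) i (Some (op_item o, lock_of (op_kind o))))
                     (c_launched c)
                     (fun x => if x == op_item o then behead (c_wl c x)
                               else c_wl c x))
  | StepRelease c i p :
      c_hold c i = Some p ->
      step c (Config (c_store c) (c_loc c) (c_pc c) (fupd (c_hold c) i None)
                     (c_launched c) (c_wl c)).

Inductive reachable (c : config) : config -> Prop :=
  | reach_refl : reachable c c
  | reach_step c1 c2 : reachable c c1 -> step c1 c2 -> reachable c c2.

Definition finished (c : config) : Prop :=
  c_launched c = size ts /\
  forall i, i < size ts -> c_pc c i = size (ops_of i) /\ c_hold c i = None.

(* streaming consistency of the global schedule: every complete concurrent
   execution yields the same item contents (hence the same answers of Q,
   which are read off the items) and the same thread results as executing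
   the transactions serially in timestamp order *)
Definition streaming_consistent : Prop :=
  forall (s0 : store) (c : config),
    reachable (init_config s0) c -> finished c ->
    (forall x, c_store c x = (serial s0 ts).1 x) /\
    (forall i, i < size ts ->
       c_loc c i = nth None (map Some (serial s0 ts).2) i).
End Model.

(* Main.v *)
Require Import Defs.
From mathcomp Require Import all_boot.
From mathcomp Require Import zify.
Set Implicit Arguments. Unset Strict Implicit. Unset Printing Implicit Defensive.

Section Proof.
Variables (I : eqType) (V Loc : Type) (ts : seq (txn I V Loc)) (s0 : store I V).

Definition dop (x : I) : op I V Loc := Op x READ (fun (l : Loc) (v : V) => (l, v)).
Definition isop j k x :=
  (k < size (ops_of ts j)) && (op_item (nth (dop x) (ops_of ts j) k) == x).
Definition pendk j k x : seq (nat * nat) :=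
  [seq (j, k') | k' <- iota k (size (ops_of ts j) - k) &
                 op_item (nth (dop x) (ops_of ts j) k') == x].
Definition pending (c : config I V Loc) x :=
  flatten [seq pendk j (c_pc c j) x | j <- iota 0 (c_launched c)].
Definition runo (st : store I V * Loc) (os : seq (op I V Loc)) :=
  foldl (fun st o => apply_op o st) st os.
Definition ST j := (serial s0 (take j ts)).1.
Definition Sx a b : store I V :=
  match onth ts a with
  | Some t => (runo (ST a, t_init t) (take b (t_ops t))).1
  | None => ST a end.
Definition Lx a b : option Loc :=
  omap (fun t => (runo (ST a, t_init t) (take b (t_ops t))).2) (onth ts a).
Definition lt2 a b c d := (a < c) || ((a == c) && (b < d)).

Record Inv (c : config I V Loc) : Prop := {
  inv1 : c_launched c <= size ts;
  inv2 : forall j, c_launched c <= j -> c_pc c j = 0;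
  inv3 : forall j, c_loc c j = Lx j (c_pc c j);
  inv4 : forall x, c_wl c x = pending c x;
  inv5 : forall x j k j' k', isop j k x -> isop j' k' x -> k < c_pc c j ->
           c_pc c j' <= k' -> lt2 j k j' k';
  inv6 : forall x a b, (forall j k, isop j k x -> lt2 j k a b = (k < c_pc c j)) ->
           c_store c x = Sx a b x }.

Lemma ops_size j : 0 < size (ops_of ts j) -> j < size ts.
Proof.
rewrite /ops_of; case: (ltnP j (size ts)) => // H.
by rewrite nth_default ?size_map.
Qed.

Lemma ops_onth j t : onth ts j = Some t -> ops_of ts j = t_ops t.
Proof.
move=> H; have Hj : j < size ts by rewrite -onthTE H.
by rewrite /ops_of (nth_map t) // (onth_nth t _ _ _ H).
Qed.

Lemma onth_ex j : j < size ts -> exists t, onth ts j = Some t.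
Proof.
move=> H; case E: (onth ts j) => [t|]; first by exists t.
by move: H; rewrite -onthTE E.
Qed.

Lemma apply_other (o : op I V Loc) (st : store I V * Loc) y : y != op_item o -> (apply_op o st).1 y = st.1 y.
Proof.
case: st => s l H; rewrite /apply_op; case: op_eff => l' v'.
by case: op_kind => //=; rewrite /upd (negbTE H).
Qed.

Lemma apply_same (o : op I V Loc) (s1 s2 : store I V) (l : Loc) : s1 (op_item o) = s2 (op_item o) ->
  (apply_op o (s1, l)).2 = (apply_op o (s2, l)).2 /\
  (apply_op o (s1, l)).1 (op_item o) = (apply_op o (s2, l)).1 (op_item o).
Proof.
move=> E; rewrite /apply_op E; case: op_eff => l' v'.
by case: op_kind => //=; rewrite /upd eqxx.
Qed.

Lemma serial_cat s (a b : seq (txn I V Loc)) : serial s (a ++ b) =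
  ((serial (serial s a).1 b).1, (serial s a).2 ++ (serial (serial s a).1 b).2).
Proof.
elim: a s => [|t a IH] s /=; first by case: serial.
case: run_txn => s1 l1; rewrite IH; case: (serial s1 a) => s2 ls /=.
by case: serial.
Qed.

Lemma size_serial (s : store I V) (a : seq (txn I V Loc)) : size (serial s a).2 = size a.
Proof.
elim: a s => [|t a IH] s //=; case: run_txn => s1 l1.
by have := IH s1; case: serial => s2 ls /= ->.
Qed.

Lemma serial_cons_snd (s : store I V) (t : txn I V Loc) r : (serial s (t :: r)).2 =
  (run_txn s t).2 :: (serial (run_txn s t).1 r).2.
Proof. by rewrite /=; case: run_txn => a b; case: serial. Qed.

Lemma ST0 : ST 0 = s0. Proof. by rewrite /ST take0. Qed.

Lemma STS a t : onth ts a = Some t -> ST a.+1 = (run_txn (ST a) t).1.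
Proof.
move=> H; have Ha : a < size ts by rewrite -onthTE H.
rewrite /ST (take_nth t Ha) (onth_nth t _ _ _ H) -cats1 serial_cat /=.
by case: run_txn.
Qed.

Lemma STbig a : size ts <= a -> ST a = (serial s0 ts).1.
Proof. by move=> H; rewrite /ST take_oversize. Qed.

Lemma Sx0 a : Sx a 0 = ST a.
Proof. by rewrite /Sx; case: onth => //= t; rewrite take0. Qed.

Lemma Sxbig a b : size (ops_of ts a) <= b -> Sx a b = ST a.+1.
Proof.
rewrite /Sx; case E: (onth ts a) => [t|].
  by rewrite (ops_onth E) => Hb; rewrite take_oversize // (STS E).
have Ha : size ts <= a by rewrite -onthNE E.
by rewrite !STbig // (leq_trans Ha).
Qed.

Lemma C1 x a b n : (forall k, b <= k < b + n -> ~~ isop a k x) ->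
  Sx a b x = Sx a (b + n) x.
Proof.
elim: n => [|n IH] H; first by rewrite addn0.
rewrite IH; last first.
  by move=> k /andP[h1 h2]; apply H; rewrite h1 /= addnS ltnS ltnW.
rewrite /Sx; case E: onth => [t|] //.
have Hops := ops_onth E.
case: (ltnP (b + n) (size (t_ops t))) => Hl.
  rewrite addnS (take_nth (dop x) Hl) /runo foldl_rcons apply_other //.
  have := H (b + n); rewrite leq_addr addnS ltnSn /isop Hops Hl /= => /(_ isT).
  by rewrite eq_sym.
by rewrite addnS !take_oversize // (leq_trans Hl).
Qed.

Lemma C3 x a n : (forall j k, a <= j < a + n -> ~~ isop j k x) ->
  ST a x = ST (a + n) x.
Proof.
elim: n => [|n IH] H; first by rewrite addn0.
rewrite IH; last by move=> j k /andP[h1 h2]; apply H; rewrite h1 /= addnS ltnS ltnW.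
rewrite -Sx0 (@C1 x (a + n) 0 (size (ops_of ts (a + n)))).
  by rewrite add0n Sxbig // addnS.
by move=> k _; apply H; rewrite leq_addr addnS ltnSn.
Qed.

Lemma C x a b a' b' : ~~ lt2 a' b' a b ->
  (forall j k, isop j k x -> ~~ lt2 j k a b -> lt2 j k a' b' -> False) ->
  Sx a b x = Sx a' b' x.
Proof.
move=> h H.
have [Ea|Na] := eqVneq a a'.
  subst a'; have hb : b <= b' by move: h; rewrite /lt2; lia.
  rewrite -(subnKC hb) -C1 // => k /andP[h1 h2].
  apply/negP => Hk; apply: (H a k Hk); rewrite /lt2; lia.
have Hlt : a < a' by move: h Na; rewrite /lt2; lia.
rewrite (@C1 x a b (size (ops_of ts a) - b)); last first.
  move=> k /andP[h1 h2]; apply/negP => Hk; apply: (H a k Hk); rewrite /lt2; lia.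
rewrite Sxbig; last by lia.
rewrite (@C3 x a.+1 (a' - a.+1)); last first.
  move=> j k /andP[h1 h2]; apply/negP => Hk; apply: (H j k Hk); rewrite /lt2; lia.
rewrite subnKC // -Sx0 (@C1 x a' 0 b') ?add0n //.
move=> k /andP[h1 h2]; apply/negP => Hk; apply: (H a' k Hk); rewrite /lt2; lia.
Qed.

Lemma splitD x (pc : nat -> nat) a b a' b' :
  (forall j k, isop j k x -> lt2 j k a b = (k < pc j)) ->
  (forall j k, isop j k x -> lt2 j k a' b' = (k < pc j)) ->
  Sx a b x = Sx a' b' x.
Proof.
move=> H1 H2; case: (boolP (lt2 a' b' a b)) => h.
  symmetry; apply: C; first by move: h; rewrite /lt2; lia.
  by move=> j k Hx h1 h2; rewrite H2 // in h1; rewrite H1 // (negbTE h1) in h2.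
apply: C => // j k Hx h1 h2.
by rewrite H1 // in h1; rewrite H2 // (negbTE h1) in h2.
Qed.

Lemma pendkS j k x : k < size (ops_of ts j) -> pendk j k x =
  (if op_item (nth (dop x) (ops_of ts j) k) == x then [:: (j, k)] else [::])
  ++ pendk j k.+1 x.
Proof. by move=> H; rewrite /pendk -(subnSK H) /=; case: ifP. Qed.

Lemma mem_pendk j k x p : p \in pendk j k x -> p.1 = j.
Proof. by move=> /mapP [k' _ ->]. Qed.

Lemma pendk_mem j k k' x : k <= k' -> isop j k' x -> (j, k') \in pendk j k x.
Proof.
move=> h /andP[h1 h2]; apply/mapP; exists k' => //.
by rewrite mem_filter h2 mem_iota h /=; lia.
Qed.

Lemma pendk_req j x : pendk j 0 x = requests ts j x.
Proof. by rewrite /pendk subn0. Qed.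

Lemma fupd_eq T (f : nat -> T) i v : fupd f i v i = v.
Proof. by rewrite /fupd eqxx. Qed.

Lemma fupd_neq T (f : nat -> T) i v j : j != i -> fupd f i v j = f j.
Proof. by move=> H; rewrite /fupd (negbTE H). Qed.

Lemma init_inv : Inv (init_config ts s0).
Proof.
constructor => //=.
- move=> j; have -> : Lx j 0 = omap (@t_init I V Loc) (onth ts j).
    by rewrite /Lx; case: onth => //= t; rewrite take0.
  by elim: ts j => [|t r IH] [|j] //=.
- move=> x a b H; rewrite -ST0 -Sx0; apply: C; first by rewrite /lt2; lia.
  by move=> j k Hx _ h; rewrite H // ltn0 in h.
Qed.

Lemma step_inv c c' : Inv c -> step ts c c' -> Inv c'.
Proof.
move=> HI Hs; case: Hs HI => [c0 Hl | c0 i o l s' l' Hi Hh Ho Hw Hc Hloc Happ | c0 i p Hh]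
  [H1 H2 H3 H4 H5 H6].
- constructor => //=.
  + by move=> j Hj; apply H2; lia.
  + move=> x; rewrite H4 /pending -addn1 iotaD map_cat flatten_cat /= add0n.
    by rewrite H2 // pendk_req cats0.
- pose x := op_item o.
  have Hk : c_pc c0 i < size (ops_of ts i) by rewrite -onthTE Ho.
  have Hnth : forall d, nth d (ops_of ts i) (c_pc c0 i) = o.
    by move=> d; exact: (onth_nth d _ _ _ Ho).
  have Hisop : isop i (c_pc c0 i) x by rewrite /isop Hk Hnth eqxx.
  have Hits : i < size ts by apply: ops_size; lia.
  have [t Et] := onth_ex Hits.
  have Hops := ops_onth Et.
  have Hiota : iota 0 (c_launched c0) =
      iota 0 i ++ i :: iota i.+1 (c_launched c0 - i.+1).
    have -> : c_launched c0 = i + (c_launched c0 - i) by lia.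
    rewrite iotaD add0n -(subnSK Hi) /=; congr (_ ++ _ :: iota _ _); lia.
  have Hdec : forall (pc' : nat -> nat) y,
      flatten [seq pendk j (pc' j) y | j <- iota 0 (c_launched c0)] =
      flatten [seq pendk j (pc' j) y | j <- iota 0 i] ++ pendk i (pc' i) y ++
      flatten [seq pendk j (pc' j) y | j <- iota i.+1 (c_launched c0 - i.+1)].
    by move=> pc' y; rewrite Hiota map_cat flatten_cat.
  have HA : flatten [seq pendk j (c_pc c0 j) x | j <- iota 0 i] = [::].
    move: Hw; rewrite H4 /pending Hdec.
    case HA: (flatten [seq pendk j (c_pc c0 j) x | j <- iota 0 i]) => [|p A'] //= [Ep].
    have : p \in flatten [seq pendk j (c_pc c0 j) x | j <- iota 0 i].
      by rewrite HA mem_head.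
    move=> /flattenP [s /mapP [j Hj ->] Hp].
    have := mem_pendk Hp; rewrite Ep /= => Ei.
    by move: Hj; rewrite mem_iota -Ei; lia.
  have Hnil : forall j, j < i -> pendk j (c_pc c0 j) x = [::].
    move=> j Hj; case E: pendk => [|p s] //.
    have : p \in flatten [seq pendk j (c_pc c0 j) x | j <- iota 0 i].
      apply/flattenP; exists (p :: s); last exact: mem_head.
      rewrite -E; apply: (map_f (fun j => pendk j (c_pc c0 j) x)).
      by rewrite mem_iota.
    by rewrite HA.
  have Hpi : pendk i (c_pc c0 i) x = (i, c_pc c0 i) :: pendk i (c_pc c0 i).+1 x.
    by rewrite pendkS // Hnth eqxx.
  have Hsplit : forall j k', isop j k' x -> lt2 j k' i (c_pc c0 i) = (k' < c_pc c0 j).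
    move=> j k' Hj; apply/idP/idP.
    + rewrite /lt2 => /orP [Hji | /andP [/eqP -> Hkk]] //.
      rewrite ltnNge; apply/negP => Hle.
      by have := pendk_mem Hle Hj; rewrite Hnil.
    + by move=> Hd; exact: H5 Hj Hisop Hd (leqnn _).
  have Hst : c_store c0 x = Sx i (c_pc c0 i) x := H6 x i _ Hsplit.
  have Htake : take (c_pc c0 i).+1 (t_ops t) = rcons (take (c_pc c0 i) (t_ops t)) o.
    by rewrite (take_nth o) -?Hops // Hnth.
  case Est: (runo (ST i, t_init t) (take (c_pc c0 i) (t_ops t))) => [sk lk].
  have Hl : l = lk by move: (H3 i); rewrite Hloc /Lx Et /= Est => -[].
  subst l.
  have Hsx : c_store c0 x = sk x by rewrite Hst /Sx Et Est.
  have [HL HS] := @apply_same o _ _ lk Hsx.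
  have Hsk1 : Sx i (c_pc c0 i).+1 = (apply_op o (sk, lk)).1.
    by rewrite /Sx Et Htake /runo foldl_rcons -/(runo _ _) Est.
  have s'E : s' = (apply_op o (c_store c0, lk)).1 by rewrite Happ.
  have l'E : l' = (apply_op o (c_store c0, lk)).2 by rewrite Happ.
  have Em : forall y m n, (i < m) || (m + n <= i) ->
      [seq pendk j (fupd (c_pc c0) i (c_pc c0 i).+1 j) y | j <- iota m n] =
      [seq pendk j (c_pc c0 j) y | j <- iota m n].
    move=> y m n Hmn; apply/eq_in_map => j; rewrite mem_iota => Hj.
    by rewrite fupd_neq //; apply/eqP; lia.
  constructor => /=.
  + exact: H1.
  + move=> j Hj; rewrite fupd_neq; [exact: H2 | apply/eqP; lia].
  + move=> j; have [->|N] := eqVneq j i; last by rewrite !fupd_neq //.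
    rewrite !fupd_eq /Lx Et /= Htake /runo foldl_rcons -/(runo _ _) Est l'E HL //.
  + move=> y; rewrite H4.
    set cc := Config _ _ _ _ _ _.
    have Hp' : pending cc y =
        flatten [seq pendk j (c_pc c0 j) y | j <- iota 0 i] ++
        pendk i (c_pc c0 i).+1 y ++
        flatten [seq pendk j (c_pc c0 j) y | j <- iota i.+1 (c_launched c0 - i.+1)].
      rewrite /pending /= Hdec fupd_eq !Em //; apply/orP; [by left | by right; lia].
    rewrite Hp' /pending Hdec.
    have [Ey|Ny] := eqVneq y x.
      by subst y; rewrite HA Hpi.
    rewrite (pendkS _ Hk) Hnth.
    by rewrite /x eq_sym (negbTE Ny).
  + move=> x0 j k1 j' k2 Hj Hj' Hd Hnd.
    have Hnd0 : c_pc c0 j' <= k2.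
      have [E|N] := eqVneq j' i; last by rewrite fupd_neq in Hnd.
      by subst j'; rewrite fupd_eq in Hnd; lia.
    have [Eji|Nji] := eqVneq j i; last first.
      by rewrite fupd_neq // in Hd; exact: H5 Hj Hj' Hd Hnd0.
    subst j; rewrite fupd_eq in Hd.
    case: (ltnP k1 (c_pc c0 i)) => Hk1; first exact: H5 Hj Hj' Hk1 Hnd0.
    have Ek : k1 = c_pc c0 i by lia.
    subst k1.
    have Ex0 : x0 = x.
      by move: Hj; rewrite /isop Hnth => /andP[_ /eqP].
    subst x0.
    have := Hsplit _ _ Hj'; rewrite leqNgt in Hnd0; rewrite (negbTE Hnd0).
    have [E|N] := eqVneq j' i.
      by subst j'; rewrite fupd_eq in Hnd; rewrite /lt2; lia.
    by rewrite /lt2; move: N; lia.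
  + move=> y a b Hsp.
    have [Ey|Ny] := eqVneq y x.
      subst y.
      rewrite -(@splitD x (fupd (c_pc c0) i (c_pc c0 i).+1) i (c_pc c0 i).+1 a b) //.
        by rewrite s'E Hsk1 HS.
      move=> j k' Hj'.
      have [E|N] := eqVneq j i.
        by subst j; rewrite fupd_eq /lt2 ltnn eqxx.
      rewrite fupd_neq // -(Hsplit _ _ Hj') /lt2 (negbTE N) !andFb //.
    rewrite s'E apply_other; last by rewrite Ny.
    apply: H6 => j k' Hj'; rewrite Hsp //.
    have [E|N] := eqVneq j i; last by rewrite fupd_neq.
    subst j; rewrite fupd_eq ltnS leq_eqVlt.
    have [Ek|Nk] := eqVneq k' (c_pc c0 i) => //=.
    subst k'; move: Hj'; rewrite /isop Hnth => /andP[_ /eqP Ey].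
    by rewrite -Ey /x eqxx in Ny.
- by constructor.
Qed.

Lemma reach_inv c : reachable ts (init_config ts s0) c -> Inv c.
Proof.
elim => [|c1 c2 _ IH Hs]; first exact: init_inv.
exact: step_inv IH Hs.
Qed.

Lemma serial_nth i t : onth ts i = Some t ->
  nth None (map Some (serial s0 ts).2) i = Some (run_txn (ST i) t).2.
Proof.
move=> Et; have Ha : i < size ts by rewrite -onthTE Et.
rewrite -[in serial s0 ts](cat_take_drop i ts) (drop_nth t Ha) (onth_nth t _ _ _ Et).
rewrite serial_cat /= serial_cons_snd map_cat nth_cat size_map size_serial.
rewrite size_take Ha ltnn subnn /=.
done.
Qed.

Lemma final c : reachable ts (init_config ts s0) c -> finished ts c ->
    (forall x, c_store c x = (serial s0 ts).1 x) /\
    (forall i, i < size ts ->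
       c_loc c i = nth None (map Some (serial s0 ts).2) i).
Proof.
move=> Hr [Hla Hfin]; have HI := reach_inv Hr; split.
  move=> x; rewrite (inv6 HI (a := size ts) (b := 0)).
    by rewrite /Sx onth_default // STbig.
  move=> j k /andP[Hk _].
  have Hj : j < size ts by apply: ops_size; lia.
  by rewrite (Hfin j Hj).1 Hk /lt2 Hj.
move=> i Hi; rewrite (inv3 HI i) (Hfin i Hi).1.
have [t Et] := onth_ex Hi.
by rewrite (serial_nth Et) /Lx Et /= (ops_onth Et) take_size.
Qed.

End Proof.

Theorem theorem4 (I : eqType) (V Loc : Type) (ts : seq (txn I V Loc)) :
  streaming_consistent ts.
Proof. move=> s0 c; exact: final. Qed.
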